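(* Every regular coherent group is torsionfree.
   Context: A ring is regular if it is Noetherian and every finitely generated module has a finite-dimensional resolution by finitely generated projective modules; it is regular coherent if every finitely presented module has a finite-dimensional resolution by finitely generated projective modules. A group $G$ is regular coherent if the group ring $RG$ is regular coherent for every regular ring $R$. *)

(* Defs.v *)
From HB Require Import structures.
From mathcomp Require Import all_boot all_order all_algebra.

Set Implicit Arguments.
Unset Strict Implicit.
Unset Printing Implicit Defensive.

Import GRing.Theory.
Local Open Scope ring_scope.

Definition surj (A B : Type) (f : A -> B) : Prop := forall b, exists a, f a = b.

Section Modules.
Variable S : pzRingType.

Definition is_lin (M N : lmodType S) (f : M -> N) : Prop := linear f.

Definition exact_at (A B C : lmodType S) (g : A -> B) (f : B -> C) : Prop :=
  forall b : B, f b = 0 <-> exists a : A, g a = b.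

Definition fin_gen (M : lmodType S) : Prop :=
  exists (n : nat) (f : 'rV[S]_n -> M), is_lin f /\ surj f.

Definition fin_pres (M : lmodType S) : Prop :=
  exists (n m : nat) (f : 'rV[S]_n -> M) (g : 'rV[S]_m -> 'rV[S]_n),
    [/\ is_lin f, is_lin g, surj f & exact_at g f].

Definition projective (P : lmodType S) : Prop :=
  forall (N1 N2 : lmodType S) (p : N1 -> N2) (h : P -> N2),
    is_lin p -> surj p -> is_lin h ->
    exists k : P -> N1, is_lin k /\ (forall x, p (k x) = h x).

Definition zero_module (M : lmodType S) : Prop := forall x : M, x = 0.

(* M has a finite-dimensional (finite length) resolution by finitely
   generated projective modules:
     0 -> P_n -> ... -> P_1 -> P_0 -> M -> 0  exact,
   encoded with P : nat -> lmodType S, d i : P (i+1) -> P i, eps : P 0 -> M,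
   and P i = 0 for all i >= n. *)
Definition fin_fgproj_resolution (M : lmodType S) : Prop :=
  exists (P : nat -> lmodType S) (d : forall i, P i.+1 -> P i)
         (eps : P 0%N -> M) (n : nat),
    [/\ (forall i, fin_gen (P i) /\ projective (P i)),
        (forall i, is_lin (d i)) /\ (is_lin eps /\ surj eps),
        exact_at (d 0%N) eps,
        (forall i, exact_at (d i.+1) (d i))
      & (forall i, (n <= i)%N -> zero_module (P i))].

Definition left_ideal (I : S -> Prop) : Prop :=
  [/\ I 0, forall x y, I x -> I y -> I (x + y) & forall a x, I x -> I (a * x)].

Definition noetherian : Prop :=
  forall I : S -> Prop, left_ideal I ->
    exists X : seq S, (forall x, x \in X -> I x) /\
      (forall y, I y -> exists c : S -> S, y = \sum_(x <- X) c x * x).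

Definition regular_ring : Prop :=
  noetherian /\
  forall M : lmodType S, fin_gen M -> fin_fgproj_resolution M.

Definition regular_coherent_ring : Prop :=
  forall M : lmodType S, fin_pres M -> fin_fgproj_resolution M.

End Modules.

(* S (with i : R -> S and u : G -> S) is the group ring RG:
   i is a ring morphism, u a monoid morphism into the multiplicative monoid of S, i r and u g
   commute, and (u g)_{g in G} is a basis of S as a left R-module
   (R acting through i). This determines S up to isomorphism. *)
Definition is_group_ring (R S : pzRingType) (G : groupType)
    (i : {rmorphism R -> S}) (u : G -> S) : Prop :=
  [/\ u 1%g = 1,
      forall g h : G, u (g * h)%g = u g * u h,
      forall (r : R) (g : G), i r * u g = u g * i r,
      forall s : S, exists (X : seq G) (c : G -> R),
        s = \sum_(g <- X) i (c g) * u g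
    &
      forall (X : seq G) (c : G -> R), uniq X ->
        \sum_(g <- X) i (c g) * u g = 0 -> forall g, g \in X -> c g = 0].

Definition regular_coherent_group (G : groupType) : Prop :=
  forall (R : pzRingType), regular_ring R ->
  forall (S : pzRingType) (i : {rmorphism R -> S}) (u : G -> S),
    is_group_ring i u -> regular_coherent_ring S.

Definition torsionfree (G : groupType) : Prop :=
  forall (g : G) (n : nat), (0 < n)%N -> (g ^+ n)%g = 1%g -> g = 1%g.

(* Main.v *)
From HB Require Import structures.
From mathcomp Require Import all_boot all_order all_algebra finmap.
From mathcomp.multinomials Require Import xfinmap monalg.
From mathcomp Require Import zify.
From Stdlib Require Import Lia Classical.
Require Import Defs.

Module Mod_GR.
Set Implicit Arguments.
Unset Strict Implicit.
Unset Printing Implicit Defensive.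
Import GRing.Theory.
Local Open Scope ring_scope.
Local Open Scope fset.

Section GR.
Variables (K : groupType) (R : nzRingType).
Definition GR := malg K R.
HB.instance Definition _ := GRing.Zmodule.on GR.
Implicit Types (g : GR) (k l : K).

Definition fgone : GR := << (1%g : K) >>.

Local Notation "g1 *M_[ k1 , k2 ] g2" :=
  << g1@_k1 * g2@_k2 *g (k1 * k2)%g >>
  (at level 40, no associativity, format "g1  *M_[ k1 ,  k2 ]  g2").

Definition fgmul g1 g2 : GR :=
  \sum_(k1 <- msupp g1) \sum_(k2 <- msupp g2) g1 *M_[k1, k2] g2.

Lemma fgmull g1 g2 :
  fgmul g1 g2 = \sum_(k1 <- msupp g1) \sum_(k2 <- msupp g2) g1 *M_[k1, k2] g2.
Proof. by []. Qed.

Lemma fgmulr g1 g2 :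
  fgmul g1 g2 = \sum_(k2 <- msupp g2) \sum_(k1 <- msupp g1) g1 *M_[k1, k2] g2.
Proof. by rewrite fgmull exchange_big. Qed.

Lemma fgmullw (d1 d2 : {fset K}) g1 g2 :
  msupp g1 `<=` d1 -> msupp g2 `<=` d2 ->
  fgmul g1 g2 = \sum_(k1 <- d1) \sum_(k2 <- d2) g1 *M_[k1, k2] g2.
Proof.
move=> le_d1 le_d2; rewrite fgmull (big_fset_incl _ le_d1) /=.
  apply/eq_bigr=> k1 _; apply/big_fset_incl => // k _ /mcoeff_outdom ->.
  by rewrite mulr0 monalgU0.
move=> k _ /mcoeff_outdom g1k.
by rewrite big1 => // k' _; rewrite g1k mul0r monalgU0.
Qed.

Lemma fgmulrw (d1 d2 : {fset K}) g1 g2 : msupp g1 `<=` d1 -> msupp g2 `<=` d2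
  -> fgmul g1 g2 = \sum_(k2 <- d2) \sum_(k1 <- d1) g1 *M_[k1, k2] g2.
Proof. by move=> le_d1 le_d2; rewrite (fgmullw le_d1 le_d2) exchange_big. Qed.

Definition fgmullwl (d1 : {fset K}) {g1 g2} (le : msupp g1 `<=` d1) :=
  @fgmullw _ _ g1 g2 le (fsubset_refl _).

Definition fgmulrwl (d2 : {fset K}) {g1 g2} (le : msupp g2 `<=` d2) :=
  @fgmulrw _ _ g1 g2 (fsubset_refl _) le.

Lemma fgmul0g : left_zero 0 fgmul.
Proof. by move=> g; rewrite fgmull msupp0 big_seq_fset0. Qed.

Lemma fgmulg0 : right_zero 0 fgmul.
Proof. by move=> g; rewrite fgmulr msupp0 big_seq_fset0. Qed.

Lemma fgmulUg c k g :
  fgmul << c *g k >> g = \sum_(k' <- msupp g) << c * g@_k' *g (k * k')%g >>.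
Proof.
rewrite (fgmullw msuppU_le (fsubset_refl _)) big_seq_fset1.
by apply/eq_bigr => k' _; rewrite mcoeffUU.
Qed.

Lemma fgmulgU c k g :
  fgmul g << c *g k >> = \sum_(k' <- msupp g) << g@_k' * c *g (k' * k)%g >>.
Proof.
rewrite (fgmulrw (fsubset_refl _) msuppU_le) big_seq_fset1.
by apply/eq_bigr=> k' _; rewrite mcoeffUU.
Qed.

Lemma fgmulUU c1 c2 k1 k2 :
  fgmul << c1 *g k1 >> << c2 *g k2 >> = << c1 * c2 *g (k1 * k2)%g >>.
Proof. by rewrite (fgmulrw msuppU_le msuppU_le) !big_seq_fset1 !mcoeffUU. Qed.

Lemma fgmulEl1 g1 g2 :
  fgmul g1 g2 = \sum_(k1 <- msupp g1) fgmul << g1@_k1 *g k1 >> g2.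
Proof. by apply/eq_bigr=> k _; rewrite fgmulUg. Qed.

Lemma fgmulEr1 g1 g2 :
  fgmul g1 g2 = \sum_(k2 <- msupp g2) fgmul g1 << g2@_k2 *g k2 >>.
Proof. by rewrite fgmulr; apply/eq_bigr=> k _; rewrite fgmulgU. Qed.

Lemma fgmul1g : left_id fgone fgmul.
Proof.
move=> g; rewrite fgmulUg [RHS]monalgE.
by apply/eq_bigr=> kg _; rewrite mul1r mul1g.
Qed.

Lemma fgmulg1 : right_id fgone fgmul.
Proof.
move=> g; rewrite fgmulgU [RHS]monalgE.
by apply/eq_bigr=> k _; rewrite mulr1 mulg1.
Qed.

Lemma fgmulgDl : left_distributive fgmul +%R.
Proof.
move=> g1 g2 g; rewrite [in RHS](fgmullwl (fsubsetUl _ (msupp g2))).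
rewrite [in RHS](fgmullwl (fsubsetUr (msupp g1) _)) (fgmullwl (msuppD_le _ _)).
rewrite -big_split /=; apply/eq_bigr=> k1 _.
rewrite -big_split /=; apply/eq_bigr=> k2 _.
by rewrite mcoeffD mulrDl monalgUD.
Qed.

Lemma fgmulgDr : right_distributive fgmul +%R.
Proof.
move=> g g1 g2; rewrite [in RHS](fgmulrwl (fsubsetUl _ (msupp g2))).
rewrite [in RHS](fgmulrwl (fsubsetUr (msupp g1) _)) (fgmulrwl (msuppD_le _ _)).
rewrite -big_split /=; apply/eq_bigr => k1 _.
rewrite -big_split /=; apply/eq_bigr => k2 _.
by rewrite mcoeffD mulrDr monalgUD.
Qed.

Lemma fgmulA : associative fgmul.
Proof.
move=> g1 g2 g3.
rewrite [RHS](big_morph (fgmul^~ _) (fun _ _ => fgmulgDl _ _ _) (fgmul0g _)).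
rewrite fgmulEl1; apply/eq_bigr=> k1 _.
rewrite [LHS](big_morph (fgmul _) (fun _ _ => fgmulgDr _ _ _) (fgmulg0 _)).
rewrite [RHS](big_morph (fgmul^~ _) (fun _ _ => fgmulgDl _ _ _) (fgmul0g _)).
apply/eq_bigr=> k2 _.
rewrite [LHS](big_morph (fgmul _) (fun _ _ => fgmulgDr _ _ _) (fgmulg0 _)).
by rewrite fgmulEr1; apply/eq_bigr=> k3 _; rewrite !fgmulUU mulrA mulgA.
Qed.

Lemma fgoner_eq0 : fgone != 0.
Proof. by apply/eqP/malgP=> /(_ 1%g) /eqP; rewrite mcoeffUU mcoeff0 oner_eq0. Qed.

HB.instance Definition _ := GRing.Zmodule_isRing.Build GR
  fgmulA fgmul1g fgmulg1 fgmulgDl fgmulgDr fgoner_eq0.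

Lemma GRmulE g1 g2 : g1 * g2 = fgmul g1 g2. Proof. by []. Qed.
Lemma GR1E : 1 = fgone. Proof. by []. Qed.
End GR.

End Mod_GR.
Import Mod_GR.

Module Mod_GR2.
Set Implicit Arguments.
Unset Strict Implicit.
Unset Printing Implicit Defensive.
Import GRing.Theory.
Local Open Scope ring_scope.
Local Open Scope fset.
Local Open Scope ring_scope.

Section GRprops.
Variables (K : groupType) (R : nzRingType).
Local Notation S := (GR K R).
Implicit Types (t : S) (k a : K).

Lemma coef_sum t b :
  \sum_(k' <- msupp t) t@_k' *+ (k' == b) = t@_b.
Proof.
rewrite [in RHS](monalgE t) raddf_sum /=; apply: eq_bigr => k' _.
by rewrite mcoeffU.
Qed.

Lemma coefL k t a : ((<< k >> : S) * t)@_a = t@_(k^-1 * a)%g.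
Proof.
rewrite GRmulE fgmulUg raddf_sum /= -coef_sum; apply: eq_bigr => k' _.
rewrite mcoeffU mul1r; congr (_ *+ _).
by rewrite -(inj_eq (mulgI k^-1)%g) mulKg.
Qed.

Lemma coefR k t a : (t * (<< k >> : S))@_a = t@_(a * k^-1)%g.
Proof.
rewrite GRmulE fgmulgU raddf_sum /= -coef_sum; apply: eq_bigr => k' _.
rewrite mcoeffU mulr1; congr (_ *+ _).
by rewrite -(inj_eq (mulIg k^-1)%g) mulgK.
Qed.

Lemma UM k1 k2 : (<< k1 >> : S) * << k2 >> = << (k1 * k2)%g >>.
Proof. by rewrite GRmulE fgmulUU mulr1. Qed.

Lemma UX k i : (<< k >> : S) ^+ i = << (k ^+ i)%g >>.
Proof.
elim: i => [|i IH]; first by rewrite expr0 expg0.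
by rewrite exprS IH UM expgS.
Qed.

Definition iC (c : R) : S := << c *g (1%g : K) >>.
Definition uG (k : K) : S := << k >>.

Lemma CU (c : R) k : iC c * uG k = uG k * iC c.
Proof. by rewrite /iC /uG !GRmulE !fgmulUU mulr1 mul1r mulg1 mul1g. Qed.

Lemma CM (c1 c2 : R) : iC (c1 * c2) = iC c1 * iC c2.
Proof. by rewrite /iC GRmulE fgmulUU mulg1. Qed.

Lemma iC_is_additive : additive iC.
Proof. by move=> x y; rewrite /iC monalgUB. Qed.
HB.instance Definition _ := GRing.isAdditive.Build R S iC iC_is_additive.
Lemma iC_mult : multiplicative iC.
Proof. by split; [move=> x y; exact: CM | ]. Qed.
HB.instance Definition _ := GRing.isMultiplicative.Build R S iC iC_mult.

Lemma iCuG c k : iC c * uG k = << c *g k >>.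
Proof. by rewrite /iC /uG GRmulE fgmulUU mulr1 mul1g. Qed.

Definition aug (s : S) : R := mmap idfun (fun _ => (1 : R)) s.

Lemma augU c k : aug << c *g k >> = c.
Proof. by rewrite /aug mmapU mulr1. Qed.

Lemma augD x y : aug (x + y) = aug x + aug y.
Proof. by rewrite /aug raddfD. Qed.
Lemma augB x y : aug (x - y) = aug x - aug y.
Proof. by rewrite /aug raddfB. Qed.
Lemma aug_sum I (r : seq I) (F : I -> S) : aug (\sum_(i <- r) F i) = \sum_(i <- r) aug (F i).
Proof. by rewrite /aug raddf_sum. Qed.

Lemma augE x : aug x = \sum_(k <- msupp x) x@_k.
Proof. by rewrite /aug mmapE; apply: eq_bigr => k _; rewrite mulr1. Qed.

Lemma augM x y : aug (x * y) = aug x * aug y.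
Proof.
rewrite GRmulE fgmull aug_sum !augE big_distrl /=; apply: eq_bigr => k1 _.
rewrite aug_sum big_distrr /=; apply: eq_bigr => k2 _.
by rewrite augU.
Qed.

Lemma aug1 : aug 1 = 1.
Proof. by rewrite GR1E /fgone augU. Qed.

Lemma auguG k : aug (uG k) = 1.
Proof. by rewrite augU. Qed.

End GRprops.

End Mod_GR2.
Import Mod_GR2.

Module Mod_GR3.
Set Implicit Arguments.
Unset Strict Implicit.
Unset Printing Implicit Defensive.
Import GRing.Theory.
Local Open Scope ring_scope.

Lemma GR_is_group_ring (K : groupType) (R : nzRingType) :
  is_group_ring (@iC K R) (@uG K R).
Proof.
split.
- by [].
- by move=> g h; rewrite UM.
- by move=> r g; rewrite CU.
- move=> s; exists (msupp s), (fun g => s@_g).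
  by rewrite [LHS]monalgE; apply: eq_bigr => g _; rewrite iCuG.
- move=> X c uX H g gX.
  have := congr1 (mcoeff g) H; rewrite mcoeff0 raddf_sum /=.
  rewrite (bigD1_seq g) //= iCuG mcoeffUU big1 ?addr0 // => g' ne.
  by rewrite iCuG mcoeffU (negbTE ne).
Qed.

End Mod_GR3.
Import Mod_GR3.

Module Mod_Orb.
Set Implicit Arguments.
Unset Strict Implicit.
Unset Printing Implicit Defensive.
Import GRing.Theory.
Local Open Scope fset.
Local Open Scope ring_scope.

Section Orbit.
Variables (K : choiceType) (V : zmodType) (n : nat) (tau : K -> K).
Hypothesis n_gt0 : (0 < n)%N.
Hypothesis Hper : forall a, iter n tau a = a.
Hypothesis Hfree : forall a i j, (i < n)%N -> (j < n)%N ->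
  iter i tau a = iter j tau a -> i = j.

Definition orbit_of a : pred K := fun b => [exists i : 'I_n, b == iter i tau a].

Lemma orb_refl a : orbit_of a a.
Proof. by apply/existsP; exists (Ordinal n_gt0). Qed.

Lemma orb_tau a : orbit_of (tau a) =1 orbit_of a.
Proof.
move=> b; apply/existsP/existsP => [[i /eqP ->]|[[[|i'] Hi] /eqP ->]].
- rewrite -iterSr; have [lt|ge] := ltnP i.+1 n.
  + by exists (Ordinal lt).
  + have E : i.+1 = n by have := ltn_ord i; move: ge; clear; lia.
    by exists (Ordinal n_gt0); rewrite E Hper.
- have Hn : (n.-1 < n)%N by rewrite prednK.
  exists (Ordinal Hn) => /=; rewrite -iterSr prednK // Hper //.
- have Hi' : (i' < n)%N by apply: ltnW.
  by exists (Ordinal Hi') => /=; rewrite -iterSr.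
Qed.

Definition rr a := choose (orbit_of a) a.

Lemma rr_orb a : orbit_of a (rr a).
Proof. exact: chooseP (orb_refl a). Qed.

Lemma rr_tau a : rr (tau a) = rr a.
Proof.
rewrite /rr (eq_choose (orb_tau a)); apply: choose_id; last exact: orb_refl.
by rewrite -orb_tau orb_refl.
Qed.

Lemma rr_iter k a : rr (iter k tau a) = rr a.
Proof. by elim: k => [|k IH] //=; rewrite rr_tau. Qed.

Variable f : {malg V[K]}.

Section B.
Hypothesis finv : forall a, f@_(tau a) = f@_a.

Lemma f_iter k a : f@_(iter k tau a) = f@_a.
Proof. by elim: k => [|k IH] //=; rewrite finv. Qed.

Definition tB : {malg V[K]} :=
  [malg a in msupp f => if a == rr a then f@_a else 0].

Lemma tBE a : tB@_a = if a == rr a then f@_a else 0.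
Proof.
rewrite mcoeffE; case: ifP => // /negbT /mcoeff_outdom ->.
by case: ifP.
Qed.

Lemma tB_sum a : \sum_(i < n) tB@_(iter i tau a) = f@_a.
Proof.
have /existsP [i0 /eqP H0] := rr_orb a.
rewrite (bigD1 i0) //= tBE rr_iter -H0 eqxx H0 f_iter big1 ?addr0 // => i ne.
rewrite tBE rr_iter H0; case: eqP => // /Hfree E.
by rewrite (val_inj (E (ltn_ord i) (ltn_ord i0))) eqxx in ne.
Qed.

End B.

Section A.
Hypothesis fsum : forall a, \sum_(i < n) f@_(iter i tau a) = 0.

Definition jj a : nat :=
  if [pick j : 'I_n | iter j.+1 tau a == rr a] is Some j then val j else 0.

Lemma jj_spec a : (jj a < n)%N /\ iter (jj a).+1 tau a = rr a.
Proof.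
rewrite /jj; case: pickP => [j /eqP Hj | none]; first by split; [apply: ltn_ord|].
exfalso; move: (rr_orb a) => /existsP [[[|i'] Hi] /eqP H0].
- have Hn : (n.-1 < n)%N by rewrite prednK.
  move: (none (Ordinal Hn)) => /=; rewrite -iterS prednK // Hper H0 /= eqxx //.
- have Hi' : (i' < n)%N by apply: ltnW.
  by move: (none (Ordinal Hi')) => /=; rewrite -iterS H0 eqxx.
Qed.

Lemma jj_uniq a j : (j < n)%N -> iter j.+1 tau a = rr a -> j = jj a.
Proof.
move=> jn H; have [jl Hj] := jj_spec a.
by apply: (Hfree (a := tau a)) => //; rewrite -!iterSr H Hj.
Qed.

Definition gA a := \sum_(0 <= i < (jj a).+1) f@_(iter i tau a).

Lemma gA_step a : gA a - gA (tau a) = f@_a.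
Proof.
have [jl Hj] := jj_spec a.
rewrite /gA; case E: (jj a) => [|j'].
- have E2 : jj (tau a) = n.-1.
    apply/esym/jj_uniq; first by rewrite prednK.
    rewrite prednK // Hper rr_tau; by rewrite E in Hj.
  rewrite E2 prednK // [X in _ - X]big_mkord fsum big_nat1 subr0 //.
- have E2 : jj (tau a) = j'.
    apply/esym/jj_uniq; first by rewrite E in jl; apply: ltnW.
    by rewrite rr_tau -Hj E -iterSr.
  rewrite E2 big_nat_recl //; under eq_bigr do rewrite iterSr. by rewrite addrK.
Qed.

Definition DA : {fset K} := seq_fset tt
  (flatten [seq [seq iter k tau b | k <- iota 0 n.+1] | b <- msupp f]).

Lemma gA_out a : a \notin DA -> gA a = 0.
Proof.
move=> aD; rewrite /gA big_nat big1 // => i /andP[_ ilt].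
have [jl _] := jj_spec a.
have il : (i < n)%N by move: ilt jl; clear; lia.
apply/eqP; rewrite mcoeff_eq0; apply: contra aD => Hs.
rewrite seq_fsetE; apply/flatten_mapP; exists (iter i tau a) => //.
apply/mapP; exists (n - i)%N; first by rewrite mem_iota; move: il; clear; lia.
by rewrite -iterD subnK ?Hper // ltnW.
Qed.

Definition tA : {malg V[K]} := [malg a in DA => gA a].

Lemma tAE a : tA@_a = gA a.
Proof. by rewrite mcoeffE; case: ifPn => // /gA_out ->. Qed.

Lemma tA_step a : tA@_a - tA@_(tau a) = f@_a.
Proof. by rewrite !tAE gA_step. Qed.

End A.
End Orbit.

End Mod_Orb.
Import Mod_Orb.

Module Mod_GR4.
Set Implicit Arguments.
Unset Strict Implicit.
Unset Printing Implicit Defensive.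
Import GRing.Theory.
Local Open Scope fset.
Local Open Scope ring_scope.

Section Acyc.
Variables (K : groupType) (R : nzRingType) (h : K) (n : nat).
Hypothesis n_gt0 : (0 < n)%N.
Hypothesis hn : (h ^+ n)%g = 1%g.
Hypothesis Hh : forall i j, (i < n)%N -> (j < n)%N -> (h ^+ i)%g = (h ^+ j)%g -> i = j.
Local Notation S := (GR K R).

Definition T : S := uG R h.
Definition NN : S := \sum_(i < n) T ^+ i.
Definition xx : S := 1 - T.

Definition tauL (a : K) := (h^-1 * a)%g.
Definition tauR (a : K) := (a * h^-1)%g.

Lemma iterL i a : iter i tauL a = (h^-1 ^+ i * a)%g.
Proof. by elim: i => [|i IH] /=; rewrite ?expg0 ?mul1g // IH /tauL expgS mulgA. Qed.
Lemma iterR i a : iter i tauR a = (a * h^-1 ^+ i)%g.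
Proof. by elim: i => [|i IH] /=; rewrite ?expg0 ?mulg1 // IH /tauR expgSr mulgA. Qed.

Lemma perL a : iter n tauL a = a.
Proof. by rewrite iterL expVgn hn invg1 mul1g. Qed.
Lemma perR a : iter n tauR a = a.
Proof. by rewrite iterR expVgn hn invg1 mulg1. Qed.

Lemma freeL a i j : (i < n)%N -> (j < n)%N -> iter i tauL a = iter j tauL a -> i = j.
Proof.
move=> il jl; rewrite !iterL => /mulIg; rewrite !expVgn => /invg_inj.
exact: Hh.
Qed.
Lemma freeR a i j : (i < n)%N -> (j < n)%N -> iter i tauR a = iter j tauR a -> i = j.
Proof.
move=> il jl; rewrite !iterR => /mulgI; rewrite !expVgn => /invg_inj.
exact: Hh.
Qed.

Lemma coefTL i t a : (T ^+ i * t)@_a = t@_(iter i tauL a).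
Proof.
elim: i t a => [|i IH] t a; first by rewrite expr0 mul1r.
rewrite exprSr -mulrA IH /T /uG coefL. by rewrite iterS.
Qed.
Lemma coefTR i t a : (t * T ^+ i)@_a = t@_(iter i tauR a).
Proof.
elim: i t a => [|i IH] t a; first by rewrite expr0 mulr1.
by rewrite exprS mulrA IH /T /uG coefR iterS.
Qed.

Lemma coefNL t a : (NN * t)@_a = \sum_(i < n) t@_(iter i tauL a).
Proof. by rewrite /NN mulr_suml raddf_sum /=; apply: eq_bigr => i _; rewrite coefTL. Qed.
Lemma coefNR t a : (t * NN)@_a = \sum_(i < n) t@_(iter i tauR a).
Proof. by rewrite /NN mulr_sumr raddf_sum /=; apply: eq_bigr => i _; rewrite coefTR. Qed.

Lemma coefxL t a : (xx * t)@_a = t@_a - t@_(tauL a).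
Proof. by rewrite /xx mulrBl mul1r mcoeffB -(expr1 T) coefTL. Qed.
Lemma coefxR t a : (t * xx)@_a = t@_a - t@_(tauR a).
Proof. by rewrite /xx mulrBr mulr1 mcoeffB -(expr1 T) coefTR. Qed.

Lemma L1 s : xx * s = 0 -> exists t, s = NN * t.
Proof.
move=> H.
have inv : forall a, s@_(tauL a) = s@_a.
  by move=> a; apply/eqP; rewrite eq_sym -subr_eq0 -coefxL H mcoeff0.
exists (tB n tauL s); apply/malgP => a.
by rewrite coefNL (tB_sum n_gt0 perL freeL inv).
Qed.

Lemma R1 s : s * xx = 0 -> exists t, s = t * NN.
Proof.
move=> H.
have inv : forall a, s@_(tauR a) = s@_a.
  by move=> a; apply/eqP; rewrite eq_sym -subr_eq0 -coefxR H mcoeff0.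
exists (tB n tauR s); apply/malgP => a.
by rewrite coefNR (tB_sum n_gt0 perR freeR inv).
Qed.

Lemma L2 s : NN * s = 0 -> exists t, s = xx * t.
Proof.
move=> H.
have sm : forall a, \sum_(i < n) s@_(iter i tauL a) = 0.
  by move=> a; rewrite -coefNL H mcoeff0.
exists (tA n tauL s); apply/malgP => a.
by rewrite coefxL (tA_step n_gt0 perL freeL sm).
Qed.

Lemma R2 s : s * NN = 0 -> exists t, s = t * xx.
Proof.
move=> H.
have sm : forall a, \sum_(i < n) s@_(iter i tauR a) = 0.
  by move=> a; rewrite -coefNR H mcoeff0.
exists (tA n tauR s); apply/malgP => a.
by rewrite coefxR (tA_step n_gt0 perR freeR sm).
Qed.

Lemma TN : T * NN = NN.
Proof.
rewrite /NN mulr_sumr; under eq_bigr do rewrite -exprS.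
case: n n_gt0 hn => // m _ hm.
rewrite big_ord_recr /= big_ord_recl /= expr0 [in RHS]addrC; congr (_ + _).
  by rewrite /T /uG UX hm.
Qed.

Lemma NT : NN * T = NN.
Proof.
rewrite /NN mulr_suml; under eq_bigr do rewrite -exprSr.
case: n n_gt0 hn => // m _ hm.
rewrite big_ord_recr /= big_ord_recl /= expr0 [in RHS]addrC; congr (_ + _).
  by rewrite /T /uG UX hm.
Qed.

Lemma xN : xx * NN = 0.
Proof. by rewrite /xx mulrBl mul1r TN subrr. Qed.
Lemma Nx : NN * xx = 0.
Proof. by rewrite /xx mulrBr mulr1 NT subrr. Qed.

Lemma augN : aug NN = n%:R.
Proof.
rewrite /NN aug_sum (eq_bigr (fun _ => 1)) ?sumr_const ?card_ord //.
by move=> i _; rewrite /T /uG UX auguG.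
Qed.

Lemma augx : aug xx = 0.
Proof. by rewrite /xx augB aug1 /T auguG subrr. Qed.

End Acyc.

End Mod_GR4.
Import Mod_GR4.

Module Mod_Mod.
Set Implicit Arguments.
Unset Strict Implicit.
Unset Printing Implicit Defensive.
Import GRing.Theory.
Local Open Scope ring_scope.

Section Lin.
Variables (S : pzRingType) (M N : lmodType S) (f : M -> N).
Hypothesis lf : is_lin f.

Lemma linD u v : f (u + v) = f u + f v.
Proof. by have := lf 1 u v; rewrite !scale1r. Qed.
Lemma lin0 : f 0 = 0.
Proof.
have := lf 1 0 0; rewrite !scale1r !addr0 => /eqP.
by rewrite eq_sym -subr_eq0 addrK => /eqP.
Qed.
Lemma linZ a u : f (a *: u) = a *: f u.
Proof. by have := lf a u 0; rewrite !addr0 lin0 addr0. Qed.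
Lemma linN u : f (- u) = - f u.
Proof. by rewrite -scaleN1r linZ scaleN1r. Qed.
Lemma linB u v : f (u - v) = f u - f v.
Proof. by rewrite linD linN. Qed.
End Lin.

Lemma lin_id (S : pzRingType) (M : lmodType S) : is_lin (@id M).
Proof. by []. Qed.

Lemma lin_comp (S : pzRingType) (M N L : lmodType S) (f : M -> N) (g : N -> L) :
  is_lin f -> is_lin g -> is_lin (g \o f).
Proof. by move=> lf lg a u v /=; rewrite lf lg. Qed.

Section Chase.
Variables (S : pzRingType) (a b : S).
Hypotheses (ab0 : a * b = 0) (ba0 : b * a = 0).

Definition op (c : bool) := if c then a else b.
Lemma opop c : op (~~ c) * op c = 0.
Proof. by case: c. Qed.

Definition acyc (M : lmodType S) := forall c (y : M), op c *: y = 0 ->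
  exists w, y = op (~~ c) *: w.

Hypothesis acycS : forall c (s : S), op c * s = 0 -> exists t, s = op (~~ c) * t.

Lemma acyc_rV k : acyc 'rV[S]_k.
Proof.
move=> c y Hy.
have E : forall j, exists t, y 0 j == op (~~ c) * t.
  move=> j; have := congr1 (fun M : 'rV[S]_k => M 0 j) Hy; rewrite /= !mxE => H.
  by have [t ->] := acycS H; exists t.
exists (\row_j xchoose (E j)); apply/rowP => j; rewrite !mxE.
exact/eqP/(xchooseP (E j)).
Qed.

Lemma acyc_fgproj (P : lmodType S) : fin_gen P -> projective P -> acyc P.
Proof.
move=> [k [f [lf sf]]] pP.
have [g [lg Hg]] := pP _ _ f id lf sf (@lin_id S P).
move=> c y Hy.
have Hy' : op c *: g y = 0 by rewrite -(linZ lg) Hy (lin0 lg).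
have [w Hw] := acyc_rV Hy'.
by exists (f w); rewrite -(linZ lf) -Hw Hg.
Qed.

Local Unset Implicit Arguments.
Section Res.
Variables (M : lmodType S) (P : nat -> lmodType S) (d : forall i, P i.+1 -> P i)
  (eps : P 0%N -> M) (n0 : nat).
Hypotheses (hd : forall i, is_lin (d i)) (heps : is_lin eps) (seps : surj eps)
  (ex0 : exact_at (d 0%N) eps) (exS : forall i, exact_at (d i.+1) (d i))
  (hz : forall i, (n0 <= i)%N -> zero_module (P i)) (hac : forall i, acyc (P i)).

Definition Claim i := forall c (y : P i) (z : P i.+1), op c *: y = d i z ->
  exists w v, y = op (~~ c) *: w + d i v.

Lemma claim_all k : forall i, (n0 <= i + k)%N -> Claim i.
Proof.
elim: k => [|k IH] i Hi c y z Hyz.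
  exists 0, 0; rewrite scaler0 (lin0 (hd i)) addr0; apply: hz.
  by rewrite addn0 in Hi.
have Hz : d i (op (~~ c) *: z) = 0.
  by rewrite (linZ (hd i)) -Hyz scalerA opop scale0r.
have [z' Hz'] := (proj1 (exS i _) Hz).
have Hi1 : (n0 <= i.+1 + k)%N by rewrite addSnnS.
have [w' [v' Hw']] := IH i.+1 Hi1 _ _ _ (esym Hz').
rewrite negbK in Hw'.
have Hdd : forall u, d i (d i.+1 u) = 0 by move=> u; apply/(proj2 (exS i _)); exists u.
have : op c *: (y - d i w') = 0.
  by rewrite scalerBr Hyz Hw' (linD (hd i)) Hdd addr0 (linZ (hd i)) subrr.
move=> /(hac i) [w Hw]; exists w, w'.
by rewrite -Hw subrK.
Qed.

Lemma chase c (m : M) : op c *: m = 0 -> exists w, m = op (~~ c) *: w.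
Proof.
move=> Hm; have [y0 Hy0] := seps m.
have : eps (op c *: y0) = 0 by rewrite (linZ heps) Hy0.
move=> /(proj1 (ex0 _)) [z Hz].
have [w [v Hwv]] := claim_all n0 0%N (leq_addl _ _) _ _ _ (esym Hz).
exists (eps w); rewrite -Hy0 Hwv (linD heps) (linZ heps).
have -> : eps (d 0%N v) = 0 by apply/(proj2 (ex0 _)); exists v.
by rewrite addr0.
Qed.
End Res.

Lemma acyc_of_res (M : lmodType S) : fin_fgproj_resolution M -> acyc M.
Proof.
move=> [P [d [eps [n0 [Hp [hd [heps seps]] ex0 exS hz]]]]].
move=> c m Hm; apply: chase; try eassumption.
by move=> i; have [fg pj] := Hp i; apply: acyc_fgproj.
Qed.

End Chase.

End Mod_Mod.
Import Mod_Mod.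

Module Mod_Fld.
Set Implicit Arguments.
Unset Strict Implicit.
Unset Printing Implicit Defensive.
Import GRing.Theory.
Local Open Scope ring_scope.

Lemma lin_sum (S : pzRingType) (M N : lmodType S) (f : M -> N) (lf : is_lin f)
  I (r : seq I) (F : I -> M) : f (\sum_(i <- r) F i) = \sum_(i <- r) f (F i).
Proof. exact: (big_morph f (linD lf) (lin0 lf)). Qed.

Lemma free_proj (S : pzRingType) k : projective 'rV[S]_k.
Proof.
move=> N1 N2 p h lp sp lh.
have E : forall j : 'I_k, exists y, p y == h (delta_mx 0 j).
  by move=> j; have [y Hy] := sp (h (delta_mx 0 j)); exists y; apply/eqP.
pose y j := xchoose (E j).
exists (fun v : 'rV[S]_k => \sum_j v 0 j *: y j); split.
  move=> a u v /=; rewrite scaler_sumr -big_split /=; apply: eq_bigr => j _.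
  by rewrite !mxE scalerDl scalerA.
move=> v; rewrite (lin_sum lp) [in RHS](row_sum_delta v) (lin_sum lh).
apply: eq_bigr => j _; rewrite (linZ lp) (linZ lh).
by rewrite (eqP (xchooseP (E j))).
Qed.

Lemma retract_proj (S : pzRingType) (P M : lmodType S) (f : P -> M) (s : M -> P) :
  projective P -> is_lin f -> is_lin s -> (forall m, f (s m) = m) -> projective M.
Proof.
move=> pP lf ls fs N1 N2 p h lp sp lh.
have [k [lk Hk]] := pP _ _ p (h \o f) lp sp (lin_comp lf lh).
exists (k \o s); split; first exact: lin_comp.
by move=> m /=; rewrite Hk /= fs.
Qed.

Section FF.
Variable F : finFieldType.

Lemma noeth_field : noetherian F.
Proof.
move=> I [I0 ID IM].
case: (classic (exists x, I x /\ x != 0)) => [[x [Ix nx]]|none].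
  exists [:: x]; split; first by move=> y; rewrite inE => /eqP ->.
  move=> y Iy; exists (fun _ => y / x); rewrite big_seq1.
  by rewrite -mulrA mulVf // mulr1.
exists [::]; split => // y Iy; exists (fun _ => 0); rewrite big_nil.
by case: (eqVneq y 0) => // ny; exfalso; apply: none; exists y.
Qed.

Section Sec.
Variables (k : nat) (M : lmodType F) (f : 'rV[F]_k -> M).
Hypotheses (lf : is_lin f) (sf : surj f).

Definition KK := [set v : 'rV[F]_k | f v == 0].
Definition AA : 'M[F]_(#|KK|, k) := \matrix_(i < #|KK|) (enum_val i : 'rV_k).

Lemma inAA v : (v <= AA)%MS = (f v == 0).
Proof.
apply/idP/idP.
  move=> /submxP [w ->]; rewrite mulmx_sum_row (lin_sum lf) big1 // => i _.
  rewrite (linZ lf) rowK; have := enum_valP i; rewrite inE => /eqP ->.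
  by rewrite scaler0.
move=> fv; have vK : v \in KK by rewrite inE.
by rewrite -(enum_rankK_in vK vK) -(rowK (fun i => (enum_val i : 'rV_k))) row_sub.
Qed.

Definition CC := (AA^C)%MS.

Lemma CC_uniq c1 c2 : (c1 <= CC)%MS -> (c2 <= CC)%MS -> f c1 = f c2 -> c1 = c2.
Proof.
move=> h1 h2 e; apply/eqP; rewrite -subr_eq0; apply/eqP.
have hC : (c1 - c2 <= CC)%MS by rewrite addmx_sub // -scaleN1r scalemx_sub.
have hA : (c1 - c2 <= AA)%MS by rewrite inAA (linB lf) e subrr.
by apply/eqP; rewrite -submx0 -(capmx_compl AA) sub_capmx hA.
Qed.

Lemma CC_ex m : exists c, (c <= CC)%MS && (f c == m).
Proof.
have [v <-] := sf m.
have : (v <= AA + CC)%MS by apply: submx_full; apply: addsmx_compl_full.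
move=> /sub_addsmxP [[u1 u2] /= ->]; exists (u2 *m CC).
rewrite submxMl /= (linD lf).
have : (u1 *m AA <= AA)%MS by apply: submxMl.
by rewrite inAA => /eqP ->; rewrite add0r.
Qed.

Definition sec m := xchoose (CC_ex m).
Lemma sec_spec m : (sec m <= CC)%MS /\ f (sec m) = m.
Proof. by have /andP [h /eqP e] := xchooseP (CC_ex m). Qed.

Lemma sec_lin : is_lin sec.
Proof.
move=> a u v; have [h1 e1] := sec_spec (a *: u + v).
have [h2 e2] := sec_spec u; have [h3 e3] := sec_spec v.
apply: CC_uniq => //; first by rewrite addmx_sub // scalemx_sub.
by rewrite (linD lf) (linZ lf) e1 e2 e3.
Qed.

Lemma fg_proj_field : projective M.
Proof.
apply: (retract_proj (f := f) (s := sec)) => //.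
- exact: free_proj.
- exact: sec_lin.
- by move=> m; case: (sec_spec m).
Qed.
End Sec.

Lemma rV0_zero (S : pzRingType) : zero_module 'rV[S]_0.
Proof. by move=> x; apply/rowP => -[]. Qed.

Lemma rV0_proj (S : pzRingType) : projective 'rV[S]_0.
Proof. exact: free_proj. Qed.

Lemma rV0_fg (S : pzRingType) : fin_gen 'rV[S]_0.
Proof. by exists 0%N, id; split => // v; exists v. Qed.

Lemma regular_field : regular_ring F.
Proof.
split; first exact: noeth_field.
move=> M [k [f [lf sf]]].
pose P := fun i : nat => match i with 0%N => M | _.+1 => 'rV[F]_0 end.
pose d := fun i : nat => (fun _ => 0) : P i.+1 -> P i.
exists P, d, id, 1%N; split.
- case=> [|i] /=; first by split; [exists k, f | exact: fg_proj_field].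
  by split; [exact: rV0_fg | exact: rV0_proj].
- split; last by split => // m; exists m.
  by move=> i a u v; rewrite /d scaler0 addr0.
- move=> b; split=> [-> | [a <-]] //; by exists 0.
- move=> i b; split=> [_ | _]; first by exists 0; apply/esym/rV0_zero.
  by rewrite /d.
- by case=> [|i] //= _; exact: rV0_zero.
Qed.

End FF.

End Mod_Fld.
Import Mod_Fld.

Module Mod_Main.
Set Implicit Arguments.
Unset Strict Implicit.
Unset Printing Implicit Defensive.
Import GRing.Theory.
Local Open Scope ring_scope.

Section Main.
Variables (G : groupType) (p : nat) (h : G) (n : nat).
Hypothesis n_gt0 : (0 < n)%N.
Hypothesis hn : (h ^+ n)%g = 1%g.
Hypothesis Hh : forall i j, (i < n)%N -> (j < n)%N -> (h ^+ i)%g = (h ^+ j)%g -> i = j.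
Local Notation S := (GR G 'F_p).
Local Notation x := (xx 'F_p h).
Local Notation N := (NN 'F_p h n).

Definition Mpred : pred S^o := fun s => s * x == 0.

Lemma Mpred_closed : subsemimod_closed Mpred.
Proof.
split; first split.
- by rewrite /Mpred unfold_in /= mul0r.
- by move=> u v; rewrite !unfold_in /= mulrDl => /eqP -> /eqP ->; rewrite addr0.
- by move=> a v; rewrite !unfold_in /= => /eqP H; rewrite -mulrA H mulr0.
Qed.

HB.instance Definition _ := GRing.isSubmodClosed.Build _ _ Mpred Mpred_closed.

Record Msub := MS { mval : S^o ; _ : mval \in Mpred }.
HB.instance Definition _ := [isSub for mval].
HB.instance Definition _ := [Choice of Msub by <:].
HB.instance Definition _ := [SubChoice_isSubLmodule of Msub by <:].

Lemma mN_in s : (s * N : S^o) \in Mpred.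
Proof. by rewrite unfold_in /= -mulrA (Nx _ n_gt0 hn) mulr0. Qed.

Definition fM (v : 'rV[S]_1) : Msub := MS (mN_in (v 0 0)).
Definition gM (v : 'rV[S]_1) : 'rV[S]_1 := \row_j (v 0 j * x).

Lemma fM_lin : is_lin fM.
Proof.
move=> a u v; apply: val_inj => /=.
by rewrite !mxE mulrDl -mulrA.
Qed.

Lemma gM_lin : is_lin gM.
Proof.
move=> a u v; apply/rowP => j; rewrite !mxE.
by rewrite mulrDl mulrA.
Qed.

Lemma Msub_fin_pres : fin_pres Msub.
Proof.
exists 1%N, 1%N, fM, gM; split.
- exact: fM_lin.
- exact: gM_lin.
- move=> m; have := valP m; rewrite unfold_in => /eqP H.
  have [t Ht] := R1 n_gt0 hn Hh H.
  by exists (\row_j t); apply: val_inj; rewrite /= mxE -Ht.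
- move=> b; split.
  + move=> /(congr1 val) /= H.
    have [t Ht] := R2 n_gt0 hn Hh H.
    exists (\row_j t); apply/rowP => j; rewrite !mxE (ord1 j).
    by rewrite Ht.
  + move=> [a <-]; apply: val_inj => /=.
    by rewrite mxE -mulrA (xN _ n_gt0 hn) mulr0.
Qed.

Lemma acycS_main c (s : S) : op x N c * s = 0 -> exists t, s = op x N (~~ c) * t.
Proof.
case: c => /= H.
- move: H; rewrite /op => H. exact: (L1 n_gt0 hn Hh H).
- move: H; rewrite /op => H. exact: (L2 n_gt0 hn Hh H).
Qed.

Lemma main_contra : (n %% p = 0)%N -> prime p -> regular_coherent_ring S -> False.
Proof.
move=> np pp rc.
have ac := @acyc_of_res _ _ _ (xN _ n_gt0 hn) (Nx _ n_gt0 hn) acycS_main _ (rc _ Msub_fin_pres).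
have m0in := mN_in 1.
pose m0 : Msub := MS m0in.
have Hx : op x N true *: m0 = 0.
  apply: val_inj => /=; change (x * (1 * N) = 0); by rewrite mul1r (xN _ n_gt0 hn).
have [w Hw] := ac true m0 Hx.
have := congr1 val Hw; rewrite /= mul1r => HN.
have HN2 : N = N * mval w by exact: HN.
have := valP w; rewrite unfold_in => /eqP Hw2.
have [t Ht] := R1 n_gt0 hn Hh Hw2.
have H3 : (1 - N * t) * N = 0 by rewrite mulrBl mul1r -mulrA -Ht -HN2 subrr.
have [t' Ht'] := R2 n_gt0 hn Hh H3.
have := congr1 (@aug _ _) Ht'.
rewrite augB aug1 !augM augN augx mulr0.
have -> : (n%:R : 'F_p) = 0.
  have pn : (p %| n)%N by rewrite /dvdn np.
  by rewrite -(divnK pn) natrM pchar_Fp_0 // mulr0.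
by rewrite mul0r subr0 => /eqP; rewrite oner_eq0.
Qed.

End Main.


End Mod_Main.
Import Mod_Main.

Set Implicit Arguments.
Unset Strict Implicit.
Unset Printing Implicit Defensive.
Import GRing.Theory.
Theorem lemma4p3 (G : groupType) : regular_coherent_group G -> torsionfree G.
Proof.
move=> H g n n0 gn.
case: (eqVneq g 1%g) => // ng; exfalso.
have ex : exists m, (0 < m)%N && (g ^+ m == 1)%g by exists n; rewrite n0 gn eqxx.
case: (ex_minnP ex) => m /andP [m0 /eqP gm] mmin.
have m1 : (1 < m)%N.
  case: m m0 gm mmin => [|[|m]] // _ g1 _; have g1' : g = 1%g := g1; by rewrite g1' eqxx in ng.
have pp : prime (pdiv m) by apply: pdiv_prime.
have np : (m %% pdiv m = 0)%N by apply/eqP; move: (pdiv_dvd m); rewrite /dvdn.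
have Hh : forall i j, (i < m)%N -> (j < m)%N -> (g ^+ i)%g = (g ^+ j)%g -> i = j.
  have key : forall i j, (i < j)%N -> (j < m)%N -> (g ^+ i)%g = (g ^+ j)%g -> False.
    move=> i j ij jm E.
    have E2 : (g ^+ (j - i))%g = 1%g.
      have E' : (g ^+ i * g ^+ (j - i))%g = (g ^+ i * 1)%g.
        rewrite -expgnDr subnKC; last exact: ltnW.
        by rewrite mulg1 E.
      exact: mulgI E'.
    have := mmin (j - i)%N; rewrite subn_gt0 ij E2 eqxx => /(_ isT).
    move: jm; clear; lia.
  move=> i j im jm E; case: (ltngtP i j) => // [ij|ji].
    by case: (key _ _ ij jm E).
  by case: (key _ _ ji im (esym E)).
apply: (main_contra (h := g) (n := m) (p := pdiv m) m0 gm Hh np pp).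
exact: (H 'F_(pdiv m) (regular_field _) _ _ _ (GR_is_group_ring G 'F_(pdiv m))).
Qed.
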